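(* Let $m$ be a positive integer and $F$ a distribution function with finite $m$-th absolute moment. Then $\mathsf L_{F,m}$ is invertible in $(\mathbb R_m[\mathrm D],\circ)$ and $$\mathsf L_{F,m}^{-1}=\sum_{n=0}^m\Bigl(\sum_{p\in\mathcal P(m,n)}(-1)^{n+p_1}\binom{p_1}{\Delta p}\prod_{k=1}^m\Bigl(\frac{\mu_{F,k}}{k!}\Bigr)^{(\Delta p)_k}\Bigr)\mathrm D^n.$$
   Context: $(\mathbb R_m[\mathrm D],\circ)$ is the ring of polynomials in $\mathrm D$ of degree at most $m$ with multiplication of polynomials modulo $\mathrm D^{m+1}$. $\mu_{F,k}=\int x^k\,dF(x)$ and $\mathsf L_{F,m}=\sum_{k=0}^m\frac{(-1)^k}{k!}\mu_{F,k}\mathrm D^k$. An ordered partition of length $k$ of an integer $n$ is a $k$-tuple of positive integers $p_1\ge\dots\ge p_k>0$ with sum $n$; one sets $p_i=0$ for $i>k$ (the empty partition, of length $0$, is the partition of $n=0$). $\mathcal P(m,n)$ is the set of ordered partitions of $n$ of length at most $m$. For such $p$, $\Delta p=(p_1-p_2,p_2-p_3,\dots,p_m-p_{m+1})$, and for a tuple $k=(k_1,\dots,k_m)$ of nonnegative integers with sum $q$, $\binom{q}{k}=q!/(k_1!\cdots k_m!)$. *)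

(* Defs.v *)
From HB Require Import structures.
From mathcomp Require Import all_boot all_order all_algebra.
From mathcomp Require Import all_classical all_reals all_analysis.

Set Implicit Arguments.
Unset Strict Implicit.
Unset Printing Implicit Defensive.
Import Order.TTheory GRing.Theory Num.Theory.

Local Open Scope ring_scope.

Definition dF (R : realType) (F : cumulativeBounded (0:R) (1:R)) :=
  lebesgue_stieltjes_measure F.

Definition moment (R : realType) (F : cumulativeBounded (0:R) (1:R)) (k : nat) : R :=
  Rintegral (dF F) setT (fun x : R => x ^+ k).

Definition finite_abs_moment (R : realType) (F : cumulativeBounded (0:R) (1:R))
    (m : nat) : Prop :=
  (\int[dF F]_x ((`|x| ^+ m)%:E) < +oo)%E.

(* The ring (R_m[D], o): polynomials in D (represented by 'X) of degree <= m,
   product = polynomial product truncated modulo D^(m+1). *)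
Definition trunc_mul (R : nzRingType) (m : nat) (p q : {poly R}) : {poly R} :=
  take_poly m.+1 (p * q).

Definition Lop (R : realType) (F : cumulativeBounded (0:R) (1:R)) (m : nat) : {poly R} :=
  \sum_(k < m.+1) (((-1) ^+ k / (k`!)%:R * moment F k) *: 'X^k).

(* P(m,n): ordered partitions p_1 >= ... >= p_k > 0 of n of length <= m,
   represented as the m-tuple (p_1, ..., p_m) padded with zeros, i.e.
   nonincreasing functions p : 'I_m -> 'I_(n.+1) with sum n.
   (index i : 'I_m stands for p_{i+1}) *)
Definition pval (m n : nat) (p : {ffun 'I_m -> 'I_n.+1}) (i : nat) : nat :=
  if insub i is Some j then nat_of_ord (p j) else 0%N.

Definition is_partition (m n : nat) (p : {ffun 'I_m -> 'I_n.+1}) : bool :=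
  [forall i : 'I_m, pval p i.+1 <= p i]%N && (\sum_(i < m) (p i : nat) == n)%N.

(* p_1 (0 for the empty partition) *)
Definition p1 (m n : nat) (p : {ffun 'I_m -> 'I_n.+1}) : nat := pval p 0.

Definition deltap (m n : nat) (p : {ffun 'I_m -> 'I_n.+1}) (i : 'I_m) : nat :=
  (p i - pval p i.+1)%N.

Definition multinom (m : nat) (q : nat) (k : 'I_m -> nat) : nat :=
  (q`! %/ \prod_(i < m) (k i)`!)%N.

Definition inv_coef (R : realType) (F : cumulativeBounded (0:R) (1:R)) (m n : nat) : R :=
  \sum_(p : {ffun 'I_m -> 'I_n.+1} | is_partition p)
    ((-1) ^+ (n + p1 p) * (multinom (p1 p) (deltap p))%:R *
     \prod_(i < m) ((moment F i.+1 / (i.+1)`!%:R) ^+ deltap p i)).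

Definition Linv (R : realType) (F : cumulativeBounded (0:R) (1:R)) (m : nat) : {poly R} :=
  \sum_(n < m.+1) (inv_coef F m n *: 'X^n).

(* Main.v *)
Require Import Defs.
From HB Require Import structures.
From mathcomp Require Import all_boot all_order all_algebra.
From mathcomp Require Import all_classical all_reals all_analysis.
From mathcomp Require Import ring zify.
Import GRing.Theory Num.Theory.
Set Implicit Arguments.
Unset Strict Implicit.
Local Open Scope nat_scope.
Lemma tele M (f : nat -> nat) : (forall k, k < M -> f k.+1 <= f k) -> f M = 0 ->
  forall i, i <= M -> \sum_(i <= k < M) (f k - f k.+1) = f i.
Proof.
move=> fmon fm i im.
have [k ->] : exists k, i = M - k by exists (M - i); rewrite subKn.
elim: k => [|k IH]; first by rewrite subn0 big_geq // fm.
case: (leqP M k) => mk.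
  have e : M - k.+1 = M - k by lia.
  by rewrite e IH.
rewrite big_ltn; last by lia.
have e : (M - k.+1).+1 = M - k by lia.
rewrite e IH subnK // -e; apply: fmon; lia.
Qed.

Lemma dsum M (g : nat -> nat) :
  \sum_(i < M) \sum_(i <= k < M) g k = \sum_(k < M) k.+1 * g k.
Proof.
elim: M => [|M IH]; first by rewrite !big_ord0.
rewrite !big_ord_recr /= big_nat1 -IH.
rewrite (eq_bigr (fun i : 'I_M => \sum_(i <= k < M) g k + g M)); last first.
  by move=> i _; rewrite big_nat_recr //= ltnW.
by rewrite big_split /= sum_nat_const card_ord mulSn; lia.
Qed.

Local Open Scope ring_scope.
Lemma dvd_fact_prod m (k : 'I_m -> nat) :
  (\prod_(i < m) (k i)`! %| (\sum_(i < m) k i)`!)%N.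
Proof.
elim: m k => [|m IH] k; first by rewrite !big_ord0.
rewrite !big_ord_recr /=.
set s := (\sum_(i < m) k (widen_ord (leqnSn m) i))%N.
have := bin_fact (leq_addr (k ord_max) s).
rewrite addKn => <-.
rewrite mulnA dvdn_mul // dvdn_mull //.
Qed.

Section Comb.
Variables (R : numFieldType) (m : nat) (y : nat -> R).
Local Notation B := m.+1.
Local Notation fT := {ffun 'I_m -> 'I_B}.

Definition sz (d : fT) := (\sum_(i < m) (d i : nat))%N.
Definition wt (d : fT) := (\sum_(i < m) i.+1 * d i)%N.
Definition Tr (d : fT) : R := (-1) ^+ (wt d + sz d) *
  ((sz d)`!%:R / (\prod_(i < m) (d i)`!)%:R) * \prod_(i < m) (y i.+1) ^+ (d i).
Definition dec (d : fT) (i : 'I_m) : fT := [ffun j => inord (d j - (j == i))].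

Lemma dec_val (d : fT) (i j : 'I_m) : (dec d i j : nat) = (d j - (j == i))%N.
Proof. rewrite ffunE inordK // ltnS; apply: leq_trans (leq_subr _ _) _; rewrite -ltnS; exact: ltn_ord. Qed.

Lemma sz_dec (d : fT) (i : 'I_m) : (0 < d i)%N -> (sz (dec d i)).+1 = sz d.
Proof.
move=> di; rewrite /sz (bigD1 i) // [in RHS](bigD1 i) //= dec_val eqxx.
rewrite -addSn subn1 prednK //; congr (_ + _)%N.
by apply: eq_bigr => j ji; rewrite dec_val (negbTE ji) subn0.
Qed.

Lemma wt_dec (d : fT) (i : 'I_m) : (0 < d i)%N -> (wt (dec d i) + i.+1)%N = wt d.
Proof.
move=> di; rewrite /wt (bigD1 i) // [in RHS](bigD1 i) //= dec_val eqxx.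
rewrite addnAC -{2}(muln1 i.+1) -mulnDr subn1 addn1 prednK //; congr (_ + _)%N.
by apply: eq_bigr => j ji; rewrite dec_val (negbTE ji) subn0.
Qed.

Lemma fact_dec (d : fT) (i : 'I_m) : (0 < d i)%N ->
  (\prod_(j < m) (d j)`!)%N = (d i * \prod_(j < m) (dec d i j)`!)%N.
Proof.
move=> di; rewrite (bigD1 i) // [in RHS](bigD1 i) //= dec_val eqxx.
rewrite subn1; case: (nat_of_ord (d i)) di => // k _ /=.
rewrite factS -mulnA; congr (_ * (_ * _))%N.
by apply: eq_bigr => j ji; rewrite dec_val (negbTE ji) subn0.
Qed.

Lemma ypow_dec (d : fT) (i : 'I_m) : (0 < d i)%N ->
  \prod_(j < m) (y j.+1) ^+ (d j) = y i.+1 * \prod_(j < m) (y j.+1) ^+ (dec d i j).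
Proof.
move=> di; rewrite (bigD1 i) // [in RHS](bigD1 i) //= dec_val eqxx.
rewrite subn1; case: (nat_of_ord (d i)) di => // k _ /=.
rewrite exprS -mulrA; congr (_ * (_ * _)).
by apply: eq_bigr => j ji; rewrite dec_val (negbTE ji) subn0.
Qed.

Lemma prod_fact_neq0 (d : fT) : (\prod_(i < m) (d i)`!)%:R != 0 :> R.
Proof. by rewrite pnatr_eq0 -lt0n prodn_gt0 // => i; exact: fact_gt0. Qed.

Lemma T_rec (d : fT) : (0 < sz d)%N ->
  Tr d = \sum_(i < m | (0 < d i)%N) (-1) ^+ i * y i.+1 * Tr (dec d i).
Proof.
move=> s0.
set K := (-1) ^+ (wt d + sz d) * ((sz d).-1`!%:R / (\prod_(i < m) (d i)`!)%:R)
   * \prod_(i < m) (y i.+1) ^+ (d i).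
transitivity (\sum_(i < m | (0 < d i)%N) K * (d i)%:R).
  rewrite -mulr_sumr -natr_sum.
  rewrite [X in _ = _ * X%:R](_ : _ = sz d); last first.
    rewrite /sz [RHS](bigID (fun i : 'I_m => (0 < d i)%N)) /= [X in _ = (_ + X)%N]big1 ?addn0 //.
    by move=> i; rewrite lt0n negbK => /eqP.
  rewrite /Tr /K -(prednK s0) factS /= natrM; set a := (sz d).-1 .+1%:R.
  have := prod_fact_neq0 d. move=> h.
  by field.
apply: eq_bigr => i di.
rewrite /Tr /K -(@sz_dec d i di) -(@wt_dec d i di) /= (@fact_dec d i di) (@ypow_dec d i di).
rewrite natrM.
have h1 := prod_fact_neq0 (dec d i).
have h2 : (d i)%:R != 0 :> R by rewrite pnatr_eq0 -lt0n.
have -> : (wt (dec d i) + i.+1 + (sz (dec d i)).+1 = i + (wt (dec d i) + sz (dec d i)) + 2)%N.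
  by lia.
rewrite !exprD expr2 mulN1r opprK mulr1.
field.
by rewrite h1 h2.
Qed.
Definition D n := \sum_(d : fT | wt d == n) Tr d.
Definition inc (d : fT) (i : 'I_m) : fT := [ffun j => inord (d j + (j == i))].

Lemma inc_val (d : fT) (i j : 'I_m) : (d i < m)%N -> (inc d i j : nat) = (d j + (j == i))%N.
Proof.
move=> dim; rewrite ffunE inordK //.
case: eqP => [->|_]; first by rewrite addn1 ltnS.
by rewrite addn0 ltn_ord.
Qed.

Lemma le_wt (d : fT) (i : 'I_m) : (d i <= wt d)%N.
Proof.
rewrite /wt (bigD1 i) //=; apply: leq_trans (leq_addr _ _).
by rewrite mulSn leq_addr.
Qed.

Lemma wt_ge (d : fT) (i : 'I_m) : (0 < d i)%N -> (i.+1 <= wt d)%N.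
Proof. by move=> di; rewrite -(@wt_dec d i di) leq_addl. Qed.

Lemma sz0_wt (d : fT) : sz d = 0%N -> wt d = 0%N.
Proof.
move=> /eqP; rewrite /sz sum_nat_eq0 => /forallP h.
rewrite /wt big1 // => i _.
by have /eqP -> := h i; rewrite muln0.
Qed.

Lemma incK (d : fT) (i : 'I_m) : (0 < d i)%N -> inc (dec d i) i = d.
Proof.
move=> di; apply/ffunP => j; apply: val_inj => /=.
have h : (dec d i i < m)%N.
  rewrite dec_val eqxx subn1 -ltnS prednK //; exact: ltn_ord.
rewrite inc_val // dec_val; case: eqP => [->|_]; last by rewrite !subn0 addn0.
by rewrite subn1 addn1 prednK.
Qed.

Lemma decK (d : fT) (i : 'I_m) : (d i < m)%N -> dec (inc d i) i = d.
Proof.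
move=> di; apply/ffunP => j; apply: val_inj => /=.
by rewrite dec_val inc_val // addnK.
Qed.

Lemma D_rec n : (0 < n)%N -> (n <= m)%N ->
  D n = \sum_(i < m | (i < n)%N) (-1) ^+ i * y i.+1 * D (n - i.+1)%N.
Proof.
move=> n0 nm.
rewrite /D.
rewrite (eq_bigr (fun d : fT => \sum_(i < m | (0 < d i)%N) (-1) ^+ i * y i.+1 * Tr (dec d i))); last first.
  move=> d /eqP wd; apply: T_rec; rewrite lt0n; apply/eqP => /sz0_wt.
  by rewrite wd => n00; rewrite n00 in n0.
rewrite (exchange_big_dep xpredT) //=.
rewrite [LHS](bigID (fun i : 'I_m => (i < n)%N)) /= [X in _ + X]big1 ?addr0; last first.
  move=> i; rewrite -leqNgt => ni; rewrite big_pred0 // => d.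
  apply/negP => /andP [/eqP wd di]; have := @wt_ge d i di; rewrite wd.
  by move=> h; have := leq_trans h ni; rewrite ltnn.
apply: eq_bigr => i ilt.
rewrite mulr_sumr.
rewrite (reindex_onto (inc^~ i) (dec^~ i)); last by move=> d /andP [_ di]; exact: incK.
apply: eq_big => d'.
  apply/idP/idP.
    move=> /andP [/andP [/eqP wd di] /eqP dK].
    have := @wt_dec (inc d' i) i di; rewrite dK wd => <-.
    by rewrite addnK.
  move=> /eqP wd.
  have dim : (d' i < m)%N.
    apply: (leq_ltn_trans (le_wt d' i)); rewrite wd.
    lia.
  have ipos : (0 < inc d' i i)%N by rewrite inc_val // eqxx addn1.
  rewrite ipos decK // eqxx andbT /=.
  have := @wt_dec (inc d' i) i ipos; rewrite decK // wd subnK //.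
  by move=> ->; rewrite eqxx.
by move=> /andP [_ /eqP ->].
Qed.
Lemma pval_ord n (p : {ffun 'I_m -> 'I_n.+1}) (i : 'I_m) : pval p i = p i.
Proof. by rewrite /pval valK. Qed.

Lemma pval_ge n (p : {ffun 'I_m -> 'I_n.+1}) k : (m <= k)%N -> pval p k = 0%N.
Proof. by move=> mk; rewrite /pval insubF // ltnNge mk. Qed.

Lemma part_mon n (p : {ffun 'I_m -> 'I_n.+1}) : is_partition p ->
  forall k, (k < m)%N -> (pval p k.+1 <= pval p k)%N.
Proof.
move=> /andP [/forallP h _] k km.
by have := h (Ordinal km); rewrite -pval_ord.
Qed.

Lemma part_sum n (p : {ffun 'I_m -> 'I_n.+1}) : is_partition p ->
  (\sum_(i < m) pval p i)%N = n.
Proof.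
move=> /andP [_ /eqP e]; rewrite -[RHS]e; apply: eq_bigr => i _; exact: pval_ord.
Qed.

Lemma deltap_le n (p : {ffun 'I_m -> 'I_n.+1}) i : (deltap p i <= n)%N.
Proof. rewrite /deltap; apply: leq_trans (leq_subr _ _) _; rewrite -ltnS; exact: ltn_ord. Qed.

Definition hh n (d : fT) : {ffun 'I_m -> 'I_n.+1} :=
  [ffun i : 'I_m => inord (\sum_(i <= k < m) pval d k)].
Definition hh' n (p : {ffun 'I_m -> 'I_n.+1}) : fT := [ffun i => inord (deltap p i)].

Lemma hh'_val n (p : {ffun 'I_m -> 'I_n.+1}) k : (n <= m)%N ->
  pval (hh' p) k = (pval p k - pval p k.+1)%N.
Proof.
move=> nm; case: (ltnP k m) => km.
  rewrite -[k]/(nat_of_ord (Ordinal km)) pval_ord ffunE inordK /deltap ?pval_ord //.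
  by rewrite ltnS (leq_trans (deltap_le _ _)).
by rewrite !pval_ge // ltnW.
Qed.

Lemma hhK n (p : {ffun 'I_m -> 'I_n.+1}) : (n <= m)%N -> is_partition p ->
  hh n (hh' p) = p.
Proof.
move=> nm pp; apply/ffunP => i; apply: val_inj => /=.
rewrite ffunE (eq_bigr _ (fun k _ => hh'_val p k nm)).
rewrite (tele (part_mon pp)); first by rewrite pval_ord inord_val.
  exact: pval_ge.
exact: ltnW.
Qed.

Lemma wt_nat (d : fT) : wt d = (\sum_(k < m) k.+1 * pval d k)%N.
Proof. by apply: eq_bigr => i _; rewrite pval_ord. Qed.

Lemma wt_hh' n (p : {ffun 'I_m -> 'I_n.+1}) : (n <= m)%N -> is_partition p ->
  wt (hh' p) = n.
Proof.
move=> nm pp; rewrite wt_nat -dsum; rewrite -[RHS](part_sum pp); apply: eq_bigr => i _.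
rewrite (eq_bigr _ (fun k _ => hh'_val p k nm)).
rewrite (tele (part_mon pp)); first by rewrite pval_ord.
  exact: pval_ge.
exact: ltnW.
Qed.

Lemma hh_val n (d : fT) j : wt d = n ->
  pval (hh n d) j = (\sum_(j <= k < m) pval d k)%N.
Proof.
move=> wd; case: (ltnP j m) => jm.
  have le : (\sum_(j <= k < m) pval d k < n.+1)%N.
    rewrite ltnS -wd wt_nat; apply: (@leq_trans (\sum_(0 <= k < m) pval d k)).
      rewrite [X in (_ <= X)%N](@big_cat_nat _ _ _ j); first exact: leq_addl.
        exact: leq0n.
      exact: ltnW.
    rewrite big_mkord; apply: leq_sum => k _; exact: leq_pmull.
  have := pval_ord (hh n d) (Ordinal jm); rewrite /= => ->.
  rewrite ffunE; exact: inordK.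
rewrite pval_ge; last exact: jm.
by rewrite big_geq.
Qed.

Lemma hh_part n (d : fT) : wt d = n -> is_partition (hh n d) && (hh' (hh n d) == d).
Proof.
move=> wd; apply/andP; split.
  apply/andP; split.
    apply/forallP => i; rewrite -pval_ord !hh_val //.
    by rewrite [X in (_ <= X)%N]big_ltn ?leq_addl.
  rewrite (eq_bigr (fun i : 'I_m => \sum_(i <= k < m) pval d k)%N).
    by rewrite dsum -wt_nat wd.
  by move=> i _; rewrite -pval_ord hh_val.
apply/eqP/ffunP => i; apply: val_inj => /=.
rewrite ffunE /deltap -pval_ord !hh_val // big_ltn // addnK pval_ord inord_val //.
Qed.

Lemma multinomR q (k : 'I_m -> nat) : q = (\sum_(i < m) k i)%N ->
  (multinom q k)%:R = q`!%:R / (\prod_(i < m) (k i)`!)%:R :> R.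
Proof.
move=> ->; rewrite /multinom natr_div //; first exact: dvd_fact_prod.
by rewrite unitfE pnatr_eq0 -lt0n prodn_gt0 // => i; exact: fact_gt0.
Qed.

Definition S n := \sum_(p : {ffun 'I_m -> 'I_n.+1} | is_partition p)
    ((-1) ^+ (n + p1 p) * (multinom (p1 p) (deltap p))%:R *
     \prod_(i < m) ((y i.+1) ^+ deltap p i)).

Lemma S_D n : (0 < m)%N -> (n <= m)%N -> S n = D n.
Proof.
move=> m0 nm; rewrite /S (reindex_onto (@hh n) (@hh' n)); last by move=> p pp; exact: hhK.
apply: eq_big => d.
  apply/idP/idP; last by move/eqP/hh_part.
  move=> /andP [pp /eqP <-]; by rewrite wt_hh'.
move=> H.
have wd : wt d = n.
  move: H; rewrite ?eqb_id => /andP [pp /eqP hd].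
  by rewrite -hd wt_hh'.
have /andP [_ /eqP hd] := hh_part wd.
have dl : forall i, deltap (hh n d) i = d i.
  by move=> i; rewrite -{2}hd ffunE inordK // ltnS (leq_trans (deltap_le _ _)).
have p1e : p1 (hh n d) = sz d.
  rewrite /p1 hh_val // /sz big_mkord; apply: eq_bigr => i _; exact: pval_ord.
rewrite /Tr wd p1e; congr (_ * _ * _).
  rewrite (multinomR (k := deltap (hh n d))); last by rewrite /sz; apply/esym/eq_bigr => i _; rewrite dl.
  by congr (_ / _%:R); apply: eq_bigr => i _; rewrite dl.
by apply: eq_bigr => i _; rewrite dl.
Qed.

Lemma D0 : D 0 = 1.
Proof.
rewrite /D (big_pred1 [ffun => ord0]); last first.
  move=> d /=; apply/idP/idP.
    rewrite /wt sum_nat_eq0 => /forallP h; apply/eqP/ffunP => i; apply: val_inj.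
    by have := h i; rewrite ffunE /= muln_eq0 /= => /eqP.
  by move=> /eqP ->; rewrite /wt big1 // => i _; rewrite ffunE muln0.
rewrite /Tr /wt /sz !big1 ?ffunE // => *; rewrite ?ffunE ?muln0 ?expr0 //.
by rewrite divr1 !mul1r.
Qed.
End Comb.

Lemma uniq_inv (R : comRingType) m (L Q1 Q2 : {poly R}) : L`_0 = 1 ->
  (size Q1 <= m.+1)%N -> (size Q2 <= m.+1)%N ->
  take_poly m.+1 (L * Q1) = take_poly m.+1 (L * Q2) -> Q1 = Q2.
Proof.
move=> L0 s1 s2 e.
have eP : forall i, (i < m.+1)%N -> (L * (Q1 - Q2))`_i = 0.
  move=> i im; rewrite mulrBr coefB.
  have := congr1 (fun p : {poly R} => p`_i) e; rewrite /= !coef_take_poly im => ->.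
  by rewrite subrr.
apply/polyP => i; apply/eqP; rewrite -subr_eq0 -coefB; apply/eqP.
case: (ltnP i m.+1) => im; last first.
  by rewrite coefB !nth_default ?subrr // (leq_trans _ im).
elim/ltn_ind: i im => i IH im.
have := eP i im; rewrite coefM big_ord_recl /= subn0 L0 mul1r.
rewrite big1 ?addr0 // => j _.
rewrite IH ?mulr0 //=.
  by rewrite /bump /= add1n subnSK // ?ltn_ord // leq_subr.
by apply: leq_ltn_trans (leq_subr _ _) im.
Qed.

Lemma mom0 (R : realType) (F : cumulativeBounded (0:R) (1:R)) : moment F 0 = 1.
Proof.
rewrite /moment /=.
rewrite (_ : (fun x : R => x ^+ 0) = fun=> 1); last by apply/funext=> x; rewrite expr0.
rewrite Rintegral_cst //= /dF probability_setT /= mul1r //.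
Qed.

Theorem proposition2p1p2 (R : realType) (m : nat) (F : cumulativeBounded (0:R) (1:R)) :
  (0 < m)%N -> finite_abs_moment F m ->
  (exists Q : {poly R}, (size Q <= m.+1)%N /\
     trunc_mul m (Lop F m) Q = 1 /\ trunc_mul m Q (Lop F m) = 1) /\
  (forall Q : {poly R}, (size Q <= m.+1)%N ->
     trunc_mul m (Lop F m) Q = 1 -> trunc_mul m Q (Lop F m) = 1 -> Q = Linv F m).
Proof.
move=> m0 _.
pose y := fun k : nat => moment F k / k`!%:R.
pose c := fun k : nat => (-1) ^+ k / (k`!)%:R * moment F k.
have cy : forall k, c k = (-1) ^+ k * y k.
  by move=> k; rewrite /c /y mulrAC mulrA.
have qD : forall n, (n <= m)%N -> inv_coef F m n = D m y n.
  by move=> n nm; rewrite -(S_D y m0 nm).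
have LE : Lop F m = \poly_(k < m.+1) c k by rewrite poly_def.
have QE : Linv F m = \poly_(k < m.+1) inv_coef F m k by rewrite poly_def.
have c0 : c 0%N = 1 by rewrite /c expr0 fact0 divr1 mul1r mom0.
have key : forall n, (n <= m)%N ->
    \sum_(k < n.+1) c k * inv_coef F m (n - k) = (n == 0)%:R.
  move=> n nm; rewrite big_ord_recl /= subn0 c0 mul1r.
  case: n nm => [|n] nm.
    by rewrite big_ord0 addr0 qD // D0.
  rewrite qD // D_rec // -(big_ord_widen _ (fun i : nat => (-1) ^+ i * y i.+1 * D m y (n.+1 - i.+1)%N) nm).
  rewrite -big_split /= big1 // => i _.
  rewrite /bump /= add1n cy exprS qD; last by rewrite (leq_trans (leq_subr _ _)) // ltnW.
  by rewrite mulN1r !mulNr addrN.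
have inv : trunc_mul m (Lop F m) (Linv F m) = 1.
  apply/polyP => i; rewrite /trunc_mul coef_take_poly coef1.
  case: ifP => im; last by case: i im.
  rewrite coefM -(key i im); apply: eq_bigr => k _.
  rewrite LE QE !coef_poly.
  have k1 : (k < m.+1)%N by apply: leq_ltn_trans im; rewrite -ltnS.
  have k2 : (i - k < m.+1)%N by apply: leq_ltn_trans (leq_subr _ _) im.
  by rewrite k1 k2.
have sQ : (size (Linv F m) <= m.+1)%N by rewrite QE size_poly.
have L0 : (Lop F m)`_0 = 1 by rewrite LE coef_poly /= c0.
split.
  exists (Linv F m); split => //; split => //.
  by rewrite /trunc_mul mulrC.
move=> Q sQ' e1 _.
apply: (uniq_inv L0 sQ' sQ).
have := e1; rewrite /trunc_mul => ->; by rewrite -/(trunc_mul _ _ _) inv.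
Qed.
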